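(* Let $P$ be a finite lattice and $R,R'\in\mathrm{Tr}(P)$ with $\chi^R=\chi^{R'}$. Then $\chi^{R\vee R'}=\chi^R=\chi^{R'}$, where $R\vee R'$ is the join in $\mathrm{Tr}(P)$.
   Context: For a finite lattice $(P,\le)$, a transfer system on $P$ is a partial order $R$ on $P$ refining $\le$ that is closed under restriction: if $x\,R\,z$ and $y\le z$ then $(x\wedge y)\,R\,y$. $\mathrm{Tr}(P)$ is the lattice of transfer systems ordered by inclusion of relations; the join $R\vee R'$ is the smallest transfer system containing both. For $R\in\mathrm{Tr}(P)$ and $x\in P$, $\chi^R(x)$ denotes the least element of $\{y\in P: y\,R\,x\}$ (which exists). *)

(* Defs.v *)
From HB Require Import structures.
From mathcomp Require Import all_boot all_order.
Set Implicit Arguments. Unset Strict Implicit. Unset Printing Implicit Defensive.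
Import Order.Theory.
Local Open Scope order_scope.

Section TransferSystems.
Context {disp : Order.disp_t} {P : finTBLatticeType disp}.

Definition transfer_system (R : rel P) : bool :=
  [&& [forall x, R x x],
      [forall x, forall y, (R x y && R y x) ==> (x == y)],
      [forall x, forall y, forall z, (R x y && R y z) ==> R x z],
      [forall x, forall y, R x y ==> (x <= y)] &
      [forall x, forall y, forall z, (R x z && (y <= z)) ==> R (x `&` y) y]].

Definition subrelb (R S : rel P) : bool := [forall x, forall y, R x y ==> S x y].

(* join in Tr(P): the smallest transfer system containing R and R'
   (intersection of all transfer systems containing both; finite quantification
   over all relations on P, encoded as finite functions). *)
Definition tr_join (R R' : rel P) : rel P :=
  fun x y => [forall T : {ffun P -> {ffun P -> bool}},
    (transfer_system (fun a b => T a b) && subrelb R (fun a b => T a b)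
       && subrelb R' (fun a b => T a b)) ==> T x y].

(* chi^R(x): least element of {y | y R x}; for a transfer system this set
   contains x and is closed under meets, so its least element is its meet. *)
Definition chi (R : rel P) (x : P) : P := \meet_(y | R y x) y.

End TransferSystems.

(* Main.v *)
Require Import Defs.
From mathcomp Require Import all_boot all_order.
Import Order.Theory.
Local Open Scope order_scope.

Section H.
Context {disp : Order.disp_t} {P : finTBLatticeType disp}.

Lemma tsP (R : rel P) : transfer_system R ->
  [/\ forall x, R x x, forall x y, R x y -> R y x -> x = y,
      forall x y z, R x y -> R y z -> R x z, forall x y, R x y -> x <= y &
      forall x y z, R x z -> y <= z -> R (x `&` y) y].
Proof.
case/and5P=> /forallP h1 /forallP h2 /forallP h3 /forallP h4 /forallP h5; split.
- by [].
- by move=> x y a b; move/forallP: (h2 x) => /(_ y) /implyP; rewrite a b => /(_ isT) /eqP.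
- by move=> x y z a b; move/forallP: (h3 x) => /(_ y) /forallP /(_ z) /implyP; rewrite a b; apply.
- by move=> x y a; move/forallP: (h4 x) => /(_ y) /implyP; apply.
- by move=> x y z a b; move/forallP: (h5 x) => /(_ y) /forallP /(_ z) /implyP; rewrite a b; apply.
Qed.

Lemma chi_le (R : rel P) x y : R y x -> chi R x <= y.
Proof. by move=> h; apply: meets_inf. Qed.

Lemma chi_R (R : rel P) x : transfer_system R -> R (chi R x) x.
Proof.
case/tsP=> rf _ tr le rs.
have cx : chi R x <= x by apply: chi_le.
suff : R (x `&` chi R x) x by rewrite (meet_idPr cx).
rewrite /chi; apply: (big_ind (fun m => R (x `&` m) x)).
- by rewrite meetx1.
- move=> a b ha hb.
  have e : x `&` (a `&` b) = (x `&` a) `&` (x `&` b).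
    by rewrite meetACA meetxx.
  rewrite e; apply: (tr _ (x `&` b)) => //.
  by apply: rs ha _; rewrite leIl.
- by move=> y hy; rewrite (meet_idPr (le _ _ hy)).
Qed.

End H.

Theorem lemma2p8 (disp : Order.disp_t) (P : finTBLatticeType disp) (R R' : rel P) :
  transfer_system R -> transfer_system R' ->
  (forall x : P, chi R x = chi R' x) ->
  forall x : P, chi (tr_join R R') x = chi R x /\ chi (tr_join R R') x = chi R' x.
Proof.
move=> tR tR' hc.
have [rf _ tr le rs] := tsP _ tR.
have [rf' _ tr' le' rs'] := tsP _ tR'.
set c := chi R.
have cle x : c x <= x by apply: chi_le.
have cmono x z : x <= z -> c x <= c z.
  move=> h; have := rs _ _ _ (chi_R _ z tR) h => /chi_le.
  by move=> h2; apply: (le_trans h2); rewrite leIl.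
have cid x : c (c x) = c x.
  apply/le_anti; rewrite cle /=; apply: chi_le; apply: (tr _ (c x)).
    exact: chi_R. exact: chi_R.
pose T := [ffun a : P => [ffun b : P => (a <= b) && (c b <= a)]].
have TE a b : T a b = (a <= b) && (c b <= a) by rewrite !ffunE.
have tT : transfer_system (fun a b => T a b).
  apply/and5P; split.
  - by apply/forallP=> x; rewrite TE lexx cle.
  - apply/forallP=> x; apply/forallP=> y; apply/implyP; rewrite !TE.
    by case/andP=> /andP[a _] /andP[b _]; apply/eqP/le_anti; rewrite a b.
  - apply/forallP=> x; apply/forallP=> y; apply/forallP=> z; apply/implyP; rewrite !TE.
    case/andP=> /andP[a b] /andP[d e]; rewrite (le_trans a d) /=.
    apply: le_trans b; rewrite -(cid z); exact: cmono.
  - by apply/forallP=> x; apply/forallP=> y; apply/implyP; rewrite !TE; case/andP.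
  - apply/forallP=> x; apply/forallP=> y; apply/forallP=> z; apply/implyP; rewrite !TE.
    case/andP=> /andP[a b] d; rewrite leIr /= lexI cle andbT.
    exact: le_trans (cmono _ _ d) b.
have sub (S : rel P) : transfer_system S -> (forall x, chi S x = c x) ->
    subrelb S (fun a b => T a b).
  move=> tS hS; apply/forallP=> a; apply/forallP=> b; apply/implyP=> h.
  have [_ _ _ leS _] := tsP _ tS.
  rewrite /= TE (leS _ _ h) /=. have := chi_le _ _ _ h. by rewrite hS.
have subR : subrelb R (fun a b => T a b) by apply: sub.
have subR' : subrelb R' (fun a b => T a b) by apply: sub => // y; rewrite -hc.
move=> x; rewrite -hc; suff -> : chi (tr_join R R') x = c x by [].
apply/le_anti/andP; split.
- apply: chi_le; apply/forallP => U; apply/implyP => /andP[/andP[_ hU] _].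
  by move/forallP: hU => /(_ (c x)) /forallP /(_ x) /implyP; apply; apply: chi_R.
- apply/meetsP => y hy.
  move/forallP: hy => /(_ T) /implyP; rewrite tT subR subR' => /(_ isT).
  by rewrite TE => /andP[].
Qed.
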